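(* Let $H$ be a Hilbert space with norm $\|\cdot\|$, $A$ a positive definite selfadjoint operator on $H$, $\beta\in(0,1)$, $0=t_0<t_1<\dots<t_N=T$ a partition with $\kappa_0=t_1-t_0$, $U_0\in D(A)$, and $f:[0,T]\to H$. Let $\hat G$ be the continuous piecewise linear function (linear on each $[t_j,t_{j+1}]$) with $\hat G(0)=AU_0-f(0)$ and $\hat G(t_j)=0$ for $j=1,\dots,N$. Then there is a constant $C>0$ depending on $\beta$ such that for $t\in(\kappa_0,T]$ \[ \int_0^t (g_{\beta,t}(\tau))^{-1}\|\hat G(\tau)\|^2\,d\tau\leq C\|AU_0-f(0)\|^2\kappa_0^{1+\beta}, \] and \[ \int_0^t (t-\tau)^{\beta-1}\|\hat G(\tau)\|\,d\tau\leq\frac1\beta\|AU_0-f(0)\|\left(t^\beta-(t-\kappa_0)^\beta\right)\leq C\kappa_0\|AU_0-f(0)\|(t-\kappa_0)^{\beta-1}, \] where $g_{\beta,t}(\tau)=\frac{1}{\Gamma(1-\beta)}\left((t-\tau)^{-\beta}+\tau^{-\beta}\right)$. *)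

(* Defs.v *)
From HB Require Import structures.
From mathcomp Require Import all_boot all_order all_algebra.
From mathcomp Require Import all_classical all_reals all_analysis.
Set Implicit Arguments. Unset Strict Implicit. Unset Printing Implicit Defensive.
Import Order.TTheory GRing.Theory Num.Theory.
Import numFieldNormedType.Exports.
Local Open Scope classical_set_scope.
Local Open Scope ring_scope.

Definition Gamma_fun (R : realType) (s : R) : R :=
  Rintegral (@lebesgue_measure R) `]0%R, +oo[%classic
    (fun x : R => x `^ (s - 1) * expR (- x)).

Definition g_bt (R : realType) (beta t tau : R) : R :=
  (Gamma_fun (1 - beta))^-1 * ((t - tau) `^ (- beta) + tau `^ (- beta)).

Definition is_inner_product (R : realType) (H : completeNormedModType R)
    (inner : H -> H -> R) : Prop :=
  [/\ (forall x y, inner x y = inner y x),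
      (forall a x y z, inner (a *: x + y) z = a * inner x z + inner y z) &
      (forall x, inner x x = `|x| ^+ 2)].

Definition linear_op_on (R : realType) (H : completeNormedModType R)
    (D : set H) (A : H -> H) : Prop :=
  [/\ D 0,
      (forall a x y, D x -> D y -> D (a *: x + y)) &
      (forall a x y, D x -> D y -> A (a *: x + y) = a *: A x + A y)].

(* (A, D(A)) is a densely defined selfadjoint operator: A equals its adjoint, i.e. symmetric on D(A) and D(adjoint) is contained in D(A). *)

Definition selfadjoint (R : realType) (H : completeNormedModType R)
    (inner : H -> H -> R) (D : set H) (A : H -> H) : Prop :=
  [/\ linear_op_on D A,
      closure D = setT,
      (forall x y, D x -> D y -> inner (A x) y = inner x (A y)) &
      (forall y z, (forall x, D x -> inner (A x) y = inner x z) -> D y)].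

Definition pos_def (R : realType) (H : completeNormedModType R)
    (inner : H -> H -> R) (D : set H) (A : H -> H) : Prop :=
  exists2 c : R, 0 < c & forall x, D x -> c * `|x| ^+ 2 <= inner (A x) x.

Definition time_partition (R : realType) (N : nat) (t : nat -> R) (T : R) : Prop :=
  [/\ (0 < N)%N, t 0%N = 0, (forall j, (j < N)%N -> t j < t j.+1) & t N = T].

Definition piecewise_linear (R : realType) (H : normedModType R)
    (N : nat) (t : nat -> R) (G : R -> H) : Prop :=
  forall j, (j < N)%N -> forall tau, t j <= tau <= t j.+1 ->
    G tau = ((t j.+1 - tau) / (t j.+1 - t j)) *: G (t j)
            + ((tau - t j) / (t j.+1 - t j)) *: G (t j.+1).

(* Main.v *)
Require Import Defs.
From HB Require Import structures.
From mathcomp Require Import all_boot all_order all_algebra.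
From mathcomp Require Import all_classical all_reals all_analysis.
From mathcomp Require Import ring lra measurable_realfun.
Import Order.TTheory GRing.Theory Num.Theory.
Import numFieldNormedType.Exports.
Local Open Scope classical_set_scope.
Local Open Scope ring_scope.

Lemma dpow (R : realType) (a s x : R) : x < s ->
  is_derive x 1 (fun y => (s - y) `^ a) (- (a * (s - x) `^ (a - 1))).
Proof.
move=> xs.
have h1 : is_derive x 1 (fun y : R => s - y) (-1).
  have h : is_derive x 1 (cst s - id) (0 - 1) by apply: is_deriveB.
  by rewrite sub0r in h.
have sx : 0 < s - x by rewrite subr_gt0.
have := @is_derive1_comp R (fun z : R => z `^ a) (fun y => s - y) x _ _ (is_derive1_powR a sx) h1.
by rewrite mulrN1.
Qed.

Lemma int_pow (R : realType) (b s k : R) : 0 < b -> 0 < k -> k < s ->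
  (\int[@lebesgue_measure R]_(x in `[0%R, k]) ((s - x) `^ (b - 1))%:E
    = (b^-1 * (s `^ b - (s - k) `^ b))%:E)%E.
Proof.
move=> b0 k0 ks.
pose F := fun x : R => - b^-1 * (s - x) `^ b.
have dF x : x < s -> is_derive x 1 F ((s - x) `^ (b - 1)).
  move=> xs; apply: is_derive_eq; first by apply: is_deriveZ; exact: dpow.
  by rewrite /GRing.scale /= mulrN mulNr opprK mulrA mulVf ?gt_eqF // mul1r.
have cF x : x < s -> {for x, continuous F}.
  move=> xs; apply: differentiable_continuous; apply/derivable1_diffP.
  by have [] := dF x xs.
rewrite (@continuous_FTC2 _ _ F).
- by rewrite /F -EFinB; congr (_%:E); rewrite !subr0; lra.
- exact: k0.
- apply: continuous_in_subspaceT => x; rewrite inE /= in_itv /= => /andP[_ xk].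
  apply: differentiable_continuous; apply/derivable1_diffP.
  by have [] := @dpow R (b - 1) s x (le_lt_trans xk ks : x < s).
- split.
  + move=> x; rewrite in_itv /= => /andP[_ xk].
    by have [] := dF x (lt_trans xk ks).
  + apply: cvg_at_right_filter; apply: cF; lra.
  + apply: cvg_at_left_filter; apply: cF; lra.
- move=> x; rewrite in_itv /= => /andP[_ xk].
  by rewrite derive1E; have [_ ->] := dF x (lt_trans xk ks).
Qed.
Lemma split_int (R : realType) (k s : R) (f : R -> R) : 0 < k -> k < s ->
  (forall x, 0 < x < s -> 0 <= f x) -> measurable_fun `]0%R, k] f ->
  (forall x, k < x < s -> f x = 0) ->
  (\int[@lebesgue_measure R]_(x in `]0%R, s[) (f x)%:E
    = \int[@lebesgue_measure R]_(x in `]0%R, k]) (f x)%:E)%E.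
Proof.
move=> k0 ks f0 mf fz.
have E : `]0%R, s[%classic = `]0%R, k]%classic `|` `]k, s[%classic :> set R.
  by apply: itv_bndbnd_setU; rewrite bnd_simp ?ltW.
have mf2 : measurable_fun `]k, s[ f.
  have mc : measurable_fun `]k, s[ (cst (0:R)) by exact: measurable_cst.
  apply: eq_measurable_fun mc.
  by move=> x; rewrite inE /= in_itv /= => /fz ->.
rewrite E ge0_integral_setU //.
- have -> : (\int[lebesgue_measure]_(x in `]k, s[) (f x)%:E = 0)%E.
    rewrite -(integral0 (@lebesgue_measure R) `]k, s[%classic); apply: eq_integral.
    by move=> x; rewrite inE /= in_itv /= => /fz ->.
  by rewrite adde0.
- apply/measurable_EFinP; apply/measurable_funU => //.
- move=> x [] /=; rewrite in_itv /= => /andP[x0 xk]; rewrite lee_fin; apply: f0; lra.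
- apply/eqP; apply/seteqP; split => x //= [] /=; rewrite !in_itv /=; lra.
Qed.
Lemma G_left (R : realType) (H : normedModType R) N t T (G : R -> H) :
  time_partition N t T -> piecewise_linear N t G ->
  (forall j, (1 <= j <= N)%N -> G (t j) = 0) ->
  forall x, 0 <= x <= t 1%N -> G x = ((t 1%N - x) / t 1%N) *: G 0.
Proof.
move=> [N0 t0 _ _] pl Gz x hx.
rewrite -t0 in hx; rewrite (pl 0%N N0 x hx) (Gz 1%N) ?N0 // scaler0 addr0 t0 subr0.
reflexivity.
Qed.

Lemma G_right (R : realType) (H : normedModType R) N t T (G : R -> H) :
  time_partition N t T -> piecewise_linear N t G ->
  (forall j, (1 <= j <= N)%N -> G (t j) = 0) ->
  forall x, t 1%N <= x <= T -> G x = 0.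
Proof.
move=> [N0 t0 tinc tN] pl Gz.
suff K : forall j, (1 <= j <= N)%N -> forall x, t 1%N <= x <= t j -> G x = 0.
  by move=> x; rewrite -tN; apply: K; rewrite N0 leqnn.
elim=> [//|j IH] /andP[_ jN] x /andP[h1 h2].
case: j IH jN h2 => [|j] IH jN h2.
  have -> : x = t 1%N by apply/eqP; rewrite eq_le h2 h1.
  by apply: Gz; rewrite N0.
have [xj|xj] := leP x (t j.+1).
  by apply: IH => //; [rewrite /= ltnW | rewrite h1 xj].
rewrite (pl j.+1 jN x); last by rewrite h2 ltW.
rewrite (Gz j.+1) ?(Gz j.+2) ?scaler0 ?addr0 //= ltnW //.
Qed.

Lemma powR_antiN (R : realType) (a x y : R) : a <= 0 -> 0 < x -> x <= y ->
  y `^ a <= x `^ a.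
Proof.
move=> a0 x0 xy; have -> : a = - (- a) by rewrite opprK.
rewrite (powRN y) (powRN x).
have y0 : 0 < y by apply: lt_le_trans xy.
rewrite lef_pV2 ?posrE ?powR_gt0 //.
by apply: ge0_ler_powR; rewrite ?oppr_ge0 // nnegrE ltW.
Qed.

Lemma mpow (R : realType) (D : set R) (s a : R) :
  measurable_fun D (fun x => (s - x) `^ a).
Proof.
apply: (measurableT_comp (measurable_powR a)).
by apply: measurable_funB; [exact: measurable_cst | exact: measurable_id].
Qed.

Lemma mpow' (R : realType) (D : set R) (a : R) :
  measurable_fun D (fun x => x `^ a).
Proof.
by apply: (measurableT_comp (measurable_powR a)); exact: measurable_id.
Qed.

Lemma mlin (R : realType) (D : set R) (k g0 : R) :
  measurable_fun D (fun x => (k - x) / k * g0).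
Proof.
apply: measurable_funM; last exact: measurable_cst.
apply: measurable_funM; last exact: measurable_cst.
by apply: measurable_funB; [exact: measurable_cst | exact: measurable_id].
Qed.

Theorem lemma5p3 (R : realType) (beta : R) :
  0 < beta < 1 ->
  exists2 C : R, 0 < C &
  forall (H : completeNormedModType R) (inner : H -> H -> R)
         (D : set H) (A : H -> H) (N : nat) (t : nat -> R) (T : R)
         (U0 : H) (f : R -> H) (G : R -> H),
    is_inner_product inner ->
    selfadjoint inner D A -> pos_def inner D A ->
    time_partition N t T -> D U0 ->
    piecewise_linear N t G ->
    G 0 = A U0 - f 0 ->
    (forall j, (1 <= j <= N)%N -> G (t j) = 0) ->
    let kappa0 := t 1%N - t 0%N in
    forall s : R, kappa0 < s <= T ->
      [/\ (\int[@lebesgue_measure R]_(tau in `]0%R, s[)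
              ((g_bt beta s tau)^-1 * `|G tau| ^+ 2)%:E
            <= (C * `|A U0 - f 0| ^+ 2 * kappa0 `^ (1 + beta))%:E)%E,
          (\int[@lebesgue_measure R]_(tau in `]0%R, s[)
              ((s - tau) `^ (beta - 1) * `|G tau|)%:E
            <= (beta^-1 * `|A U0 - f 0| * (s `^ beta - (s - kappa0) `^ beta))%:E)%E &
          beta^-1 * `|A U0 - f 0| * (s `^ beta - (s - kappa0) `^ beta)
            <= C * kappa0 * `|A U0 - f 0| * (s - kappa0) `^ (beta - 1)].
Proof.
move=> /andP[b0 b1].
pose Gam := Gamma_fun (1 - beta).
have Gam0 : 0 <= Gam.
  rewrite /Gam /Gamma_fun; apply: Rintegral_ge0 => x _.
  by rewrite mulr_ge0 // ?powR_ge0 // expR_ge0.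
exists (Gam + 1); first lra.
move=> H inner D A N t T U0 f G _ _ _ tp _ pl G0 Gz kappa0 s /andP[ks sT].
have [N0 t0 tinc tN] := tp.
have ek : kappa0 = t 1%N by rewrite /kappa0 t0 subr0.
rewrite ek in ks *.
have k0 : 0 < t 1%N by have := tinc 0%N N0; rewrite t0.
rewrite -G0.
move: (t 1%N) k0 ks (@G_left _ _ _ _ _ _ tp pl Gz) (@G_right _ _ _ _ _ _ tp pl Gz) => k k0 ks Gl Gr.
set g0 := `|G 0|.
have g00 : 0 <= g0 by apply: normr_ge0.
have nG x : 0 < x <= k -> `|G x| = (k - x) / k * g0.
  move=> /andP[x0 xk]; rewrite Gl ?(ltW x0) ?xk // normrZ ger0_norm //.
  by rewrite divr_ge0 // ?subr_ge0 // ltW.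
have zG x : k < x < s -> G x = 0.
  by move=> /andP[kx xs]; apply: Gr; rewrite ltW //= (ltW (lt_le_trans xs sT)).
have sk0 : 0 < s - k by rewrite subr_gt0.
have I := @int_pow _ beta s k b0 k0 ks.
have Ile : beta^-1 * (s `^ beta - (s - k) `^ beta) <= k * (s - k) `^ (beta - 1).
  rewrite -lee_fin -I.
  have -> : ((k * (s - k) `^ (beta - 1))%:E = \int[@lebesgue_measure R]_(x in `[0%R, k])
      (cst ((s - k) `^ (beta - 1))%:E x))%E.
    by rewrite integral_cst //= lebesgue_measure_itv /= lte_fin k0 -EFinD -EFinM subr0 mulrC.
  apply: ge0_le_integral => //.
  - by move=> x _; rewrite lee_fin powR_ge0.
  - by apply/measurable_EFinP; exact: mpow.
  - move=> x; rewrite /= in_itv /= => /andP[x0 xk]; rewrite lee_fin.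
    apply: powR_antiN; lra.
have mf2 : measurable_fun `]0%R, k] (fun x => (s - x) `^ (beta - 1) * `|G x|).
  have m := measurable_funM (mpow _ `]0%R, k]%classic s (beta - 1)) (mlin _ `]0%R, k]%classic k g0).
  apply: eq_measurable_fun m.
  by move=> x; rewrite inE /= in_itv /= => hx; rewrite /= nG.
have gpos x : 0 < x < s -> (g_bt beta s x)^-1 =
    Gam * ((s - x) `^ (- beta) + x `^ (- beta)) `^ (-1).
  by move=> _; rewrite /g_bt invfM invrK powR_inv1 // addr_ge0 ?powR_ge0.
have ginv0 x : 0 <= (g_bt beta s x)^-1.
  by rewrite invr_ge0 /g_bt mulr_ge0 ?invr_ge0 ?addr_ge0 ?powR_ge0.
have mf1 : measurable_fun `]0%R, k] (fun x => (g_bt beta s x)^-1 * `|G x| ^+ 2).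
  have m := measurable_funM (measurable_funM (measurable_cst Gam)
    (measurableT_comp (measurable_powR (-1))
      (measurable_funD (mpow _ `]0%R, k]%classic s (- beta)) (mpow' _ `]0%R, k]%classic (- beta)))))
    (measurable_funX 2 (mlin _ `]0%R, k]%classic k g0)).
  apply: eq_measurable_fun m.
  move=> x; rewrite inE /= in_itv /= => /andP[x0 xk].
  rewrite gpos ?nG ?x0 ?xk //; last by rewrite (le_lt_trans xk ks).
have gb x : 0 < x <= k -> (g_bt beta s x)^-1 <= Gam * k `^ beta.
  move=> /andP[x0 xk]; rewrite /g_bt invfM invrK; apply: ler_wpM2l => //.
  have xb0 : 0 < x `^ beta by apply: powR_gt0.
  apply: (@le_trans _ _ (x `^ beta)); last first.
    apply: ge0_ler_powR => //; [exact: ltW | by rewrite nnegrE ltW | by rewrite nnegrE ltW].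

  rewrite -[X in _ <= X]invrK lef_pV2 ?posrE ?invr_gt0 //; last first.
    by apply: ltr_wpDl; rewrite ?powR_ge0 ?powR_gt0.
  by rewrite -powRN lerDr powR_ge0.
have Gb x : 0 < x <= k -> `|G x| ^+ 2 <= g0 ^+ 2.
  move=> hx; rewrite nG // exprMn.
  have w0 : 0 <= (k - x) / k by move: hx => /andP[x0 xk]; rewrite divr_ge0 ?subr_ge0 // ltW.
  have w1 : (k - x) / k <= 1 by rewrite ler_pdivrMr // mul1r; move: hx => /andP[x0 _]; lra.
  rewrite -[X in _ <= X]mul1r; apply: ler_wpM2r; first exact: sqr_ge0.
  exact: exprn_ile1.
split.
- rewrite (@split_int _ k s (fun tau => (g_bt beta s tau)^-1 * `|G tau| ^+ 2) k0 ks);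
    last 3 first.
  + by move=> x _; rewrite mulr_ge0 ?sqr_ge0.
  + exact: mf1.
  + by move=> x hx; rewrite zG // normr0 expr0n mulr0.
  apply: (@le_trans _ _ (\int[@lebesgue_measure R]_(x in `]0%R, k])
      (cst (Gam * k `^ beta * g0 ^+ 2)%:E x))%E).
    apply: ge0_le_integral => //.
    * by move=> x _; rewrite lee_fin mulr_ge0 ?sqr_ge0.
    * by apply/measurable_EFinP.
    * move=> x; rewrite /= in_itv /= => hx; rewrite lee_fin.
      by apply: ler_pM; rewrite ?sqr_ge0 ?gb ?Gb.
  rewrite integral_cst //= lebesgue_measure_itv /= lte_fin k0 -EFinD -EFinM subr0 lee_fin.
  have -> : k `^ (1 + beta) = k * k `^ beta.
    rewrite powRD.
      by rewrite powRr1 // ltW.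
    by rewrite (gt_eqF k0) implybT.

  have P0 : 0 <= k `^ beta * g0 ^+ 2 * k by rewrite !mulr_ge0 ?powR_ge0 ?sqr_ge0 // ltW.
  have -> : Gam * k `^ beta * g0 ^+ 2 * k = (k `^ beta * g0 ^+ 2 * k) * Gam by ring.
  have -> : (Gam + 1) * g0 ^+ 2 * (k * k `^ beta) = (k `^ beta * g0 ^+ 2 * k) * (Gam + 1) by ring.
  by apply: ler_wpM2l => //; lra.
- rewrite (@split_int _ k s (fun tau => (s - tau) `^ (beta - 1) * `|G tau|) k0 ks);
    last 3 first.
  + by move=> x _; rewrite mulr_ge0 ?powR_ge0.
  + exact: mf2.
  + by move=> x hx; rewrite zG // normr0 mulr0.
  apply: (@le_trans _ _ (\int[@lebesgue_measure R]_(x in `]0%R, k])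
      ((g0 * (s - x) `^ (beta - 1))%:E))%E).
    apply: ge0_le_integral => //.
    * by move=> x _; rewrite lee_fin mulr_ge0 ?powR_ge0.
    * by apply/measurable_EFinP.
    * apply/measurable_EFinP; apply: measurable_funM; [exact: measurable_cst | exact: mpow].
    * move=> x; rewrite /= in_itv /= => hx; rewrite nG // lee_fin.
      rewrite [X in _ <= X]mulrC; apply: ler_wpM2l; first exact: powR_ge0.
      rewrite -[X in _ <= X]mul1r; apply: ler_wpM2r => //.
      rewrite ler_pdivrMr // mul1r; move: hx => /andP[x0 _]; lra.
  under eq_integral do rewrite EFinM.
  rewrite ge0_integralZl_EFin //; last 2 first.
  + by move=> x _; rewrite lee_fin powR_ge0.
  + by apply/measurable_EFinP; exact: mpow.
  rewrite integral_itv_obnd_cbnd; last by apply/measurable_EFinP; exact: mpow.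
  rewrite I -EFinM lee_fin le_eqVlt; apply/orP; left; apply/eqP; ring.
- set X := s `^ beta - (s - k) `^ beta in Ile *.
  set Y := (s - k) `^ (beta - 1) in Ile *.
  have Y0 : 0 <= Y by apply: powR_ge0.
  have kY0 : 0 <= k * Y by rewrite mulr_ge0 // ltW.
  have h : beta^-1 * X <= (Gam + 1) * (k * Y).
    apply: (le_trans Ile); rewrite -[X in X <= _]mul1r; apply: ler_wpM2r => //; lra.
  have -> : beta^-1 * g0 * X = g0 * (beta^-1 * X) by ring.
  have -> : (Gam + 1) * k * g0 * Y = g0 * ((Gam + 1) * (k * Y)) by ring.
  by apply: ler_wpM2l.
Qed.
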